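(* Let $G$ and $H$ be any graphs, and let $i_G$ be the number of isolated vertices of $G$. Then $$\rho_o(G\circ H)=\begin{cases}\rho_o(G)+i_G\rho_o(H)-i_G, & \text{if } H \text{ has an isolated vertex},\\ \rho(G)+i_G\rho_o(H)-i_G, & \text{otherwise.}\end{cases}$$
   Context: All graphs are finite and simple. A packing of $G$ is a set $P\subseteq V(G)$ with $N[u]\cap N[v]=\emptyset$ for all distinct $u,v\in P$ ($N[\cdot]$ the closed neighborhood); $\rho(G)$ is the maximum size of a packing. An open packing is a set $P$ whose vertices have pairwise disjoint open neighborhoods $N(\cdot)$; $\rho_o(G)$ is the maximum size of an open packing. The lexicographic product $G\circ H$ has vertex set $V(G)\times V(H)$, with $(g,h)$ adjacent to $(g',h')$ iff $gg'\in E(G)$, or ($g=g'$ and $hh'\in E(H)$). *)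

(* Defs.v *)
From mathcomp Require Import all_boot all_order.
Set Implicit Arguments. Unset Strict Implicit. Unset Printing Implicit Defensive.

Record sgraph := SGraph {
  vert :> finType;
  adj : rel vert;
  adj_sym : symmetric adj;
  adj_irr : irreflexive adj }.

Definition onbhd (G : sgraph) (v : G) : {set G} := [set u | adj v u].
Definition cnbhd (G : sgraph) (v : G) : {set G} := v |: onbhd v.

Definition is_packing (G : sgraph) (P : {set G}) : bool :=
  [forall u in P, forall v in P, (u != v) ==> [disjoint cnbhd u & cnbhd v]].
Definition is_open_packing (G : sgraph) (P : {set G}) : bool :=
  [forall u in P, forall v in P, (u != v) ==> [disjoint onbhd u & onbhd v]].

Definition rho (G : sgraph) : nat := \max_(P : {set G} | is_packing P) #|P|.
Definition rho_o (G : sgraph) : nat := \max_(P : {set G} | is_open_packing P) #|P|.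

Definition isolated (G : sgraph) (v : G) : bool := onbhd v == set0.
Definition num_isolated (G : sgraph) : nat := #|[set v : G | isolated v]|.
Definition has_isolated (G : sgraph) : bool := [exists v : G, isolated v].

Definition lex_adj (G H : sgraph) : rel (G * H)%type :=
  fun x y => adj x.1 y.1 || ((x.1 == y.1) && adj x.2 y.2).

Lemma lex_adj_sym G H : symmetric (@lex_adj G H).
Proof.
move=> [a b] [c d]; rewrite /lex_adj /= adj_sym [c == a]eq_sym [adj d b]adj_sym.
by [].
Qed.

Lemma lex_adj_irr G H : irreflexive (@lex_adj G H).
Proof. by move=> [a b]; rewrite /lex_adj /= !adj_irr eqxx. Qed.

Definition lexprod (G H : sgraph) : sgraph :=
  @SGraph (G * H)%type (@lex_adj G H) (@lex_adj_sym G H) (@lex_adj_irr G H).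

(* Main.v *)
Require Import Defs.
From mathcomp Require Import all_boot all_order.
Set Implicit Arguments. Unset Strict Implicit. Unset Printing Implicit Defensive.
Set Implicit Arguments. Unset Strict Implicit. Unset Printing Implicit Defensive.

Lemma opP (G : sgraph) (P : {set G}) :
  reflect (forall u v z, u \in P -> v \in P -> u != v -> adj u z -> adj v z -> False)
          (is_open_packing P).
Proof.
apply: (iffP forallP) => [h u v z uP vP uv auz avz|h u].
  have := forallP (implyP (h u) uP) v; rewrite vP /= uv /= => /disjointFr.
  by move=> /(_ z); rewrite !inE auz avz => /(_ erefl).
apply/implyP => uP; apply/forallP => v; apply/implyP => vP; apply/implyP => uv.
apply/pred0P => z /=; apply/negbTE/negP; rewrite !inE => /andP[a b].
exact: (h u v z).
Qed.

Lemma pkP (G : sgraph) (P : {set G}) :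
  reflect (forall u v z, u \in P -> v \in P -> u != v ->
             (z == u) || adj u z -> (z == v) || adj v z -> False)
          (is_packing P).
Proof.
apply: (iffP forallP) => [h u v z uP vP uv auz avz|h u].
  have := forallP (implyP (h u) uP) v; rewrite vP /= uv /= => /disjointFr.
  by move=> /(_ z); rewrite !inE auz avz => /(_ erefl).
apply/implyP => uP; apply/forallP => v; apply/implyP => vP; apply/implyP => uv.
apply/pred0P => z /=; apply/negbTE/negP; rewrite !inE => /andP[a b].
exact: (h u v z).
Qed.

Lemma isoP (G : sgraph) (v : G) : reflect (forall u, ~~ adj v u) (isolated v).
Proof.
apply: (iffP eqP) => [h u|h].
  apply/negP => a; have : u \in onbhd v by rewrite inE.
  by rewrite h inE.
apply/setP => u; rewrite !inE; exact/negbTE.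
Qed.

Lemma rho_o_ge (G : sgraph) (P : {set G}) : is_open_packing P -> #|P| <= rho_o G.
Proof. move=> h; exact: (@leq_bigmax_cond _ (fun P : {set G} => is_open_packing P) (fun P => #|P|) P h). Qed.
Lemma rho_ge (G : sgraph) (P : {set G}) : is_packing P -> #|P| <= rho G.
Proof. move=> h; exact: (@leq_bigmax_cond _ (fun P : {set G} => is_packing P) (fun P => #|P|) P h). Qed.

Lemma rho_o_ex (G : sgraph) : exists2 P : {set G}, is_open_packing P & #|P| = rho_o G.
Proof.
have : 0 < #|(fun P : {set G} => is_open_packing P)|.
  apply/card_gt0P; exists set0; rewrite /in_mem /=; apply/opP => u v z; by rewrite inE.
by case/(eq_bigmax_cond (fun P : {set G} => #|P|)) => P h e; exists P.
Qed.
Lemma rho_ex (G : sgraph) : exists2 P : {set G}, is_packing P & #|P| = rho G.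
Proof.
have : 0 < #|(fun P : {set G} => is_packing P)|.
  apply/card_gt0P; exists set0; rewrite /in_mem /=; apply/pkP => u v z; by rewrite inE.
by case/(eq_bigmax_cond (fun P : {set G} => #|P|)) => P h e; exists P.
Qed.
Section S.
Variables G H : sgraph.
Local Notation L := (lexprod G H).
Local Notation I := [set v : G | isolated v].

Lemma ladj (x y : L) : adj x y = adj x.1 y.1 || ((x.1 == y.1) && adj x.2 y.2).
Proof. by []. Qed.

Lemma U_fiber (P : {set L}) g : is_open_packing P -> isolated g ->
   #|[set x in P | x.1 == g]| <= rho_o H.
Proof.
move=> /opP hP /isoP ig.
set F := [set x in P | x.1 == g].
have -> : #|F| = #|[set x.2 | x in F]|.
  apply/esym/card_in_imset => [[a b] [c d]]; rewrite !inE /= => /andP[_ /eqP->] /andP[_ /eqP->].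
  by move=> ->.
apply: rho_o_ge; apply/opP => u v z /imsetP[x xF ->] /imsetP[y yF ->] uv au av.
move: xF yF; rewrite !inE => /andP[xP /eqP x1] /andP[yP /eqP y1].
apply: (hP x y (g, z)) => //.
- by apply: contraNneq uv => ->.
- by rewrite ladj /= x1 eqxx au orbT.
- by rewrite ladj /= y1 eqxx av orbT.
Qed.

Lemma U_iso (P : {set L}) : is_open_packing P ->
  #|[set x in P | x.1 \in I]| <= #|I| * rho_o H.
Proof.
move=> hP; set PI := [set x in P | x.1 \in I].
rewrite -sum1_card (partition_big_imset (fun x : L => x.1)) /=.
apply: (@leq_trans (\sum_(g in [set x.1 | x in PI]) rho_o H)).
  apply: leq_sum => g /imsetP[x]; rewrite !inE => /andP[_ xI] ->.
  rewrite (eq_bigl (fun y => (y \in P) && (y.1 == x.1))); last first.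
    move=> y /=; rewrite !inE; case: eqP => [->|]; by rewrite ?xI ?andbT ?andbF.
  by rewrite sum1dep_card; apply: U_fiber.
rewrite sum_nat_const leq_mul2r; apply/orP; right; apply: subset_leq_card.
by apply/subsetP => g /imsetP[x]; rewrite !inE => /andP[_ xI] ->.
Qed.

Lemma U_non (P : {set L}) : is_open_packing P ->
  #|[set x in P | x.1 \notin I]| + #|I| <=
  (if has_isolated H then rho_o G else rho G).
Proof.
move=> hP; have hP' := hP; move/opP: hP => hP.
set PN := [set x in P | x.1 \notin I].
set S := [set x.1 | x in PN].
have nonI g : g \notin I -> exists a, adj g a.
  move=> gI; case: (pickP (adj g)) => [a ga|h]; first by exists a.
  by case/negP: gI; rewrite inE; apply/isoP => u; rewrite h.
have inj : {in PN &, injective (fun x : L => x.1)}.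
  move=> x y; rewrite !inE => /andP[xP xI] /andP[yP _] e.
  apply/eqP; apply/negP => /negP xy; have [a ga] : exists a, adj x.1 a by apply: nonI; rewrite inE.
  apply: (hP x y (a, x.2)) => //; first by rewrite ladj /= ga.
  by rewrite ladj /= -e ga.
have SI : S :&: I = set0.
  apply/setP => g; rewrite !inE; apply/negP => /andP[/imsetP[x]].
  by rewrite !inE => /andP[_ xI] -> gI; rewrite gI in xI.
have cardSI : #|S :|: I| = #|PN| + #|I|.
  by rewrite -(card_in_imset inj) -cardsUI SI cards0 addn0.
have isoI g u : g \in I -> ~~ adj g u by rewrite inE => /isoP.
have isoI' g u : g \in I -> ~~ adj u g by move=> gI; rewrite adj_sym isoI.
have opS : is_open_packing (S :|: I).
  apply/opP => u v z; rewrite !inE.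
  case uI: (isolated u); first by move=> _ _ _; have := isoI u z; rewrite inE uI => /(_ erefl) /negP.
  case vI: (isolated v); first by move=> _ _ _ _; have := isoI v z; rewrite inE vI => /(_ erefl) /negP.
  rewrite !orbF => /imsetP[x xP ->] /imsetP[y yP ->] uv au av.
  apply: (hP x y (z, x.2)); rewrite ?ladj /= ?au ?av //.
    by move: xP; rewrite inE => /andP[].
    by move: yP; rewrite inE => /andP[].
  by apply: contraNneq uv => ->.
case: ifP => hH; first by rewrite -cardSI; apply: rho_o_ge.
rewrite -cardSI; apply: rho_ge; apply/pkP => u v z uS vS uv.
have noedge : ~~ adj u v.
  move: uS vS uv; rewrite !inE.
  case uI: (isolated u); first by rewrite (isoI u v) // inE.
  case vI: (isolated v); first by rewrite (isoI' v u) // inE.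
  rewrite !orbF => /imsetP[x xP ->] /imsetP[y yP ->] uv'; apply/negP => axy.
  have [b hb] : exists b, adj x.2 b.
    case: (pickP (adj x.2)) => [b ab|h]; first by exists b.
    move/negbT: hH => /negP; case; apply/existsP; exists x.2.
    by apply/isoP => b; rewrite h.
  apply: (hP x y (x.1, b)); rewrite ?ladj /= ?eqxx ?hb ?orbT //.
  - by move: xP; rewrite inE => /andP[].
  - by move: yP; rewrite inE => /andP[].
  - by apply/eqP => e; rewrite e eqxx in uv'.
  - by rewrite adj_sym axy.
case/orP => [/eqP ->|au]; case/orP => [/eqP e|av].
- by rewrite e eqxx in uv.
- by rewrite adj_sym av in noedge.
- by rewrite -e au in noedge.
- exact: (opP _ opS u v z).
Qed.
End S.
Section S2.
Variables G H : sgraph.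
Local Notation L := (lexprod G H).
Local Notation I := [set v : G | isolated v].

Lemma Lconstr (S : {set G}) (h0 : H) (T : {set H}) :
  is_open_packing T ->
  (forall u v z1 z2, u \in S -> v \in S -> u != v ->
     adj u z1 || ((u == z1) && adj h0 z2) -> adj v z1 || ((v == z1) && adj h0 z2) -> False) ->
  exists2 Q : {set L}, is_open_packing Q & #|S| + #|I| * #|T| <= #|Q| + #|I|.
Proof.
move=> /opP hT hS.
have isoI (g u : G) : isolated g -> adj g u = false.
  by move=> /isoP gi; exact: negbTE (gi u).
have isoI' (g u : G) : isolated g -> adj u g = false.
  by move=> gi; rewrite adj_sym isoI.
exists (setX (S :\: I) [set h0] :|: setX I T).
  apply/opP => [[g h] [g' h'] [z1 z2]]; rewrite !inE /= /lex_adj /=.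
  case gI: (isolated g); case g'I: (isolated g'); rewrite /= ?andbF /= ?orbF.
  - move=> hT1 hT2 ne.
    rewrite (isoI _ _ gI) (isoI _ _ g'I) /=.
    move=> /andP[/eqP e1 a1] /andP[/eqP e2 a2].
    apply: (hT h h' z2) => //.
    by apply: contraNneq ne => e; rewrite e e1 e2.
  - move=> _ _ _; rewrite (isoI _ _ gI) /= => /andP[/eqP e1 _].
    by rewrite -e1 (isoI' _ _ gI) /= => /andP[/eqP e]; rewrite e gI in g'I.
  - move=> _ _ _ + ; rewrite (isoI _ _ g'I) /= => + /andP[/eqP e1 _].
    by rewrite -e1 (isoI' _ _ g'I) /= => /andP[/eqP e]; rewrite e g'I in gI.
  - move=> /andP[gS /eqP hh] /andP[g'S /eqP hh'] ne a1 a2.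
    apply: (hS g g' z1 z2) => //; last by rewrite -hh'.
      by apply: contraNneq ne => e; rewrite e hh hh'.
    by rewrite -hh.
have dis : setX (S :\: I) [set h0] :&: setX I T = set0.
  apply/setP => x; rewrite !inE; apply/negP.
  by case/andP => /andP[/andP[/negbTE -> _] _] /andP[].
rewrite -[#|_ :|: _|]addn0 -(cards0 L) -dis cardsUI !cardsX cards1 muln1.
rewrite -addnA [_ * _ + _]addnC addnA leq_add2r -(cardsID I S) addnC leq_add2l.
by apply: subset_leq_card; apply: subsetIr.
Qed.

Lemma L_main : 0 < #|H| -> exists2 Q : {set L}, is_open_packing Q &
  (if has_isolated H then rho_o G else rho G) + #|I| * rho_o H <= #|Q| + #|I|.
Proof.
move=> Hn; have [T oT eT] := rho_o_ex H; rewrite -eT.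
case: ifP => hH.
  have [S oS eS] := rho_o_ex G; rewrite -eS.
  case/existsP: hH => h0 /isoP h0i.
  apply: (Lconstr (h0 := h0)) => // u v z1 z2 uS vS uv.
  rewrite (negbTE (h0i z2)) !andbF !orbF.
  exact: (opP _ oS).
have [S oS eS] := rho_ex G; rewrite -eS.
case/card_gt0P: Hn => h0 _.
apply: (Lconstr (h0 := h0)) => // u v z1 z2 uS vS uv a1 a2.
apply: (pkP _ oS u v z1) => //.
  by case/orP: a1 => [->|/andP[/eqP -> _]]; rewrite ?eqxx ?orbT.
by case/orP: a2 => [->|/andP[/eqP -> _]]; rewrite ?eqxx ?orbT.
Qed.
End S2.

Lemma main_nat (G H : sgraph) : 0 < #|H| ->
  rho_o (lexprod G H) + num_isolated G =
  (if has_isolated H then rho_o G else rho G) + num_isolated G * rho_o H.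
Proof.
move=> Hn; rewrite /num_isolated; apply/eqP; rewrite eqn_leq; apply/andP; split.
  have [P oP <-] := rho_o_ex (lexprod G H).
  have -> : #|P| = #|[set x in P | x.1 \in [set v : G | isolated v]]|
                 + #|[set x in P | x.1 \notin [set v : G | isolated v]]|.
    rewrite -(cardsID [set x : lexprod G H | x.1 \in [set v : G | isolated v]] P).
    by congr (_ + _); apply: eq_card => x; rewrite !inE // andbC.
  rewrite -addnA addnC leq_add //; last exact: U_iso.
  exact: U_non.
have [Q oQ e] := L_main G Hn.
by apply: leq_trans e _; rewrite leq_add2r; apply: rho_o_ge.
Qed.

From mathcomp Require Import all_algebra.
Import GRing.Theory.

Theorem mainTheorem9 (G H : sgraph) (HnonEmpty : 0 < #|H|) :
  ((rho_o (lexprod G H))%:Z =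
   if has_isolated H then
     (rho_o G)%:Z + (num_isolated G)%:Z * (rho_o H)%:Z - (num_isolated G)%:Z
   else
     (rho G)%:Z + (num_isolated G)%:Z * (rho_o H)%:Z - (num_isolated G)%:Z)%R.
Proof.
have E := main_nat G HnonEmpty.
by case: ifP E => _ E; rewrite -PoszM -PoszD -E PoszD addrK.
Qed.
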